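(* Let $w$ and $w''$ be two words with nonnegative integer letters of the same length. If $\mathrm{Zero}\,w=\mathrm{Zero}\,w''$ and $\mathrm{DES}\,\mathrm{Pos}\,w=\mathrm{DES}\,\mathrm{Pos}\,w''$, then $\mathrm{Zero}\,{\bf F}_3(w)=\mathrm{Zero}\,{\bf F}_3(w'')$.
   Context: For a word $w=x_1\cdots x_n$ with nonnegative integer letters: $\mathrm{DES}\,w=\{i:1\le i\le n-1,\ x_i>x_{i+1}\}$; $\mathrm{Zero}\,w=\{i:x_i=0\}$; $\mathrm{Pos}\,w$ is the subword of positive letters of $w$. The map ${\bf F}_3$ on all finite words with nonnegative letters is defined by induction on the length $n$. If $n\le1$, or if all letters of $w$ other than the last are $0$, then ${\bf F}_3(w)=w$. Otherwise write uniquely $w=w'a0^rb$, where $a\ge1$ is the rightmost positive letter among the first $n-1$ letters, $r\ge0$, $b\ge0$ is the last letter and $w'$ is a possibly empty word. (1) If $a\le b$: ${\bf F}_3(w)={\bf F}_3(w'a0^r)\,b$. (2) If $a>b$ and $r\ge1$: writing ${\bf F}_3(w'a0^r)=w''c$ with $c$ a letter, ${\bf F}_3(w)=0\,w''\,b$. (3) If $a>b$ and $r=0$: writing ${\bf F}_3(w'a)=0^{m_1}x_1v_10^{m_2}x_2v_2\cdots0^{m_k}x_kv_k$ with $m_1\ge0$, $m_2,\dots,m_k\ge1$, $x_1,\dots,x_k$ positive letters and $v_1,\dots,v_k$ possibly empty words of positive letters, ${\bf F}_3(w)=x_10^{m_1}v_1x_20^{m_2}v_2\cdots x_k0^{m_k}v_k\,b$.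 *)

(* Defs.v *)
From mathcomp Require Import all_boot.
Set Implicit Arguments. Unset Strict Implicit. Unset Printing Implicit Defensive.

(* Words are sequences of nonnegative integers: seq nat.
   Positions are 1-indexed as in the paper. *)

Definition DES (w : seq nat) : seq nat :=
  [seq i <- iota 1 (size w).-1 | nth 0 w i < nth 0 w i.-1].

Definition Zero (w : seq nat) : seq nat :=
  [seq i <- iota 1 (size w) | nth 0 w i.-1 == 0].

Definition Pos (w : seq nat) : seq nat := [seq x <- w | 0 < x].

(* Case (3) rearrangement: for u = 0^{m1} x1 v1 0^{m2} x2 v2 ... 0^{mk} xk vk,
   returns x1 0^{m1} v1 x2 0^{m2} v2 ... xk 0^{mk} vk.
   The decomposition uses maximal zero runs and maximal positive runs.
   (Trailing zeros with no following positive letter, which are outside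
   the paper's decomposition, are left unchanged.) *)
Fixpoint swap_blocks_fuel (fuel : nat) (u : seq nat) : seq nat :=
  match fuel with
  | 0 => u
  | fuel'.+1 =>
    let m := find (fun x => 0 < x) u in
    let rest := drop m u in
    match rest with
    | [::] => u
    | x :: rest' =>
      let k := find (fun y => y == 0) rest' in
      x :: nseq m 0 ++ take k rest' ++ swap_blocks_fuel fuel' (drop k rest')
    end
  end.

Definition swap_blocks (u : seq nat) : seq nat := swap_blocks_fuel (size u) u.

Fixpoint F3_fuel (fuel : nat) (w : seq nat) : seq nat :=
  match fuel with
  | 0 => w
  | fuel'.+1 =>
    match w with
    | [::] => w
    | y :: s =>
      let p := belast y s in
      let b := last y s in
      if all (fun x => x == 0) p then w
      else
        let j := (size p - (find (fun x => 0 < x) (rev p)).+1)%N in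
        (* index (0-based) in p of the rightmost positive letter a *)
        let a := nth 0 p j in
        let r := ((size p).-1 - j)%N in
        if a <= b then rcons (F3_fuel fuel' p) b
        else if 0 < r then
          rcons (0 :: take (size p).-1 (F3_fuel fuel' p)) b
          (* F3(w'a0^r) = w'' c ; result 0 w'' b *)
        else rcons (swap_blocks (F3_fuel fuel' p)) b
    end
  end.

Definition F3 (w : seq nat) : seq nat := F3_fuel (size w) w.

(* Main.v *)
Require Import Defs.
From mathcomp Require Import all_boot zify.
Set Implicit Arguments. Unset Strict Implicit.

Definition zmask (u : seq nat) := map (fun x => x == 0) u.

Lemma zmask_rcons p b : zmask (rcons p b) = rcons (zmask p) (b == 0).
Proof. by rewrite /zmask map_rcons. Qed.

Lemma zmask_rcons_inj p b p' b' : zmask (rcons p b) = zmask (rcons p' b') ->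
  zmask p = zmask p' /\ (b == 0) = (b' == 0).
Proof. by rewrite !zmask_rcons => /rcons_inj [-> ->]. Qed.

Lemma zmask_size u v : zmask u = zmask v -> size u = size v.
Proof. by move=> H; rewrite -(size_map (fun x => x == 0) u) -(size_map (fun x => x == 0) v) -!/(zmask _) H. Qed.

Lemma ZeroE w : Zero w = [seq i <- iota 1 (size (zmask w)) | nth false (zmask w) i.-1].
Proof.
rewrite /Zero /zmask size_map; apply: eq_in_filter => i; rewrite mem_iota => /andP[H1 H2].
by rewrite (nth_map 0) //; lia.
Qed.

Lemma Zero_zmask u v : zmask u = zmask v -> Zero u = Zero v.
Proof. by move=> H; rewrite !ZeroE H. Qed.

Lemma zmask_Zero u v : size u = size v -> Zero u = Zero v -> zmask u = zmask v.
Proof.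
move=> Hs; rewrite !ZeroE => H.
have Hs' : size (zmask u) = size (zmask v) by rewrite !size_map.
apply: (eq_from_nth (x0 := false)) => // i Hi.
have E : forall m : seq bool, i < size m -> nth false m i = (i.+1 \in [seq i <- iota 1 (size m) | nth false m i.-1]).
  move=> m Hm; rewrite mem_filter mem_iota /=.
  have -> : (i.+1 < 1 + size m) = true by lia.
  by rewrite andbT.
by rewrite E // H -E // -Hs'.
Qed.

Lemma Pos_rcons p b : Pos (rcons p b) = if 0 < b then rcons (Pos p) b else Pos p.
Proof. by rewrite /Pos filter_rcons. Qed.

Lemma Pos_size u v : zmask u = zmask v -> size (Pos u) = size (Pos v).
Proof.
move=> H; rewrite /Pos !size_filter.
have E : forall w, count (fun x => 0 < x) w = count negb (zmask w).
  by move=> w; rewrite /zmask count_map; apply: eq_count => x /=; rewrite lt0n.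
by rewrite !E H.
Qed.

Lemma DES_rcons s x : DES (rcons s x) =
  DES s ++ (if (0 < size s) && (x < last 0 s) then [:: size s] else [::]).
Proof.
rewrite /DES size_rcons.
have -> : (size s).+1.-1 = size s by [].
case Hs: (size s) => [|n]; first by [].
rewrite (_ : iota 1 n.+1 = iota 1 n ++ [:: n.+1]); last by rewrite -[n.+1]addn1 iotaD addnC.
rewrite filter_cat /= -Hs.
congr (_ ++ _).
  apply: eq_in_filter => i; rewrite mem_iota => /andP[H1 H2].
  rewrite !nth_rcons; have -> : i < size s by lia. by have -> : i.-1 < size s by lia.
rewrite nth_rcons ltnn eqxx.
rewrite nth_rcons (_ : n < size s); last by lia.
by rewrite -nth_last Hs.
Qed.

Lemma DES_lt s i : i \in DES s -> i < size s.
Proof. rewrite mem_filter mem_iota => /andP[_ /andP[H1 H2]]; lia. Qed.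

Lemma DES_rcons_eq s x s' x' : size s = size s' ->
  DES (rcons s x) = DES (rcons s' x') ->
  DES s = DES s' /\ ((0 < size s) && (x < last 0 s)) = ((0 < size s') && (x' < last 0 s')).
Proof.
move=> Hs; rewrite !DES_rcons => H.
have F : forall t y, DES t = [seq i <- DES t ++ (if (0 < size t) && (y < last 0 t) then [:: size t] else [::]) | i < size t].
  move=> t y; rewrite filter_cat; case: ifP => _ /=; rewrite ?ltnn ?cats0;
  by rewrite (eq_in_filter (a2 := predT)) ?filter_predT // => i /DES_lt.
have G : forall t y, ((0 < size t) && (y < last 0 t)) = (size t \in DES t ++ (if (0 < size t) && (y < last 0 t) then [:: size t] else [::])).
  move=> t y; rewrite mem_cat; have -> : (size t \in DES t) = false by apply/negP => /DES_lt; rewrite ltnn.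
  by case: ifP => _ /=; rewrite ?inE ?eqxx.
split; first by rewrite (F s x) (F s' x') H Hs.
by rewrite (G s x) (G s' x') H Hs.
Qed.

Lemma La p : ~~ all (fun x => x == 0) p ->
  nth 0 p (size p - (find (fun x => 0 < x) (rev p)).+1) = last 0 (Pos p) /\ 0 < last 0 (Pos p).
Proof.
elim/last_ind: p => [|q c IH] //.
rewrite all_rcons rev_rcons size_rcons Pos_rcons /=.
case: (posnP c) => [->|cpos] /=.
  rewrite subSS => Hq.
  have Hsz : 0 < size q by case: q Hq IH.
  rewrite nth_rcons (_ : size q - (find (fun x => 0 < x) (rev q)).+1 < size q); last by lia.
  exact: IH.
by rewrite subn1 /= nth_rcons ltnn eqxx last_rcons.
Qed.

Lemma swap_zmask f u v : zmask u = zmask v ->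
  zmask (swap_blocks_fuel f u) = zmask (swap_blocks_fuel f v).
Proof.
elim: f u v => [|f IH] u v H //=.
have Ef : forall w, find (fun x => 0 < x) w = find negb (zmask w).
  by move=> w; rewrite /zmask find_map; apply: eq_find => x /=; rewrite lt0n.
have Hm : find (fun x => 0 < x) u = find (fun x => 0 < x) v by rewrite !Ef H.
rewrite Hm.
have Dr : zmask (drop (find (fun x => 0 < x) v) u) = zmask (drop (find (fun x => 0 < x) v) v).
  by rewrite /zmask !map_drop -/(zmask u) -/(zmask v) H.
move: Dr.
case Eu: (drop _ u) => [|x r]; case Ev: (drop _ v) => [|x' r'] //=.
case=> Hx Hr.
have Eg : forall w, find (fun y => y == 0) w = find id (zmask w).
  by move=> w; rewrite /zmask find_map.
rewrite !Eg Hr.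
rewrite /zmask !map_cat /= !map_nseq !map_take -!/(zmask _) Hx Hr.
by rewrite (IH _ (drop (find id (zmask r')) r')) // /zmask !map_drop -!/(zmask _) Hr.
Qed.

Lemma F3_rcons f p b : F3_fuel f.+1 (rcons p b) =
  if all (fun x => x == 0) p then rcons p b
  else
    let j := (size p - (find (fun x => 0 < x) (rev p)).+1)%N in
    let a := nth 0 p j in
    let r := ((size p).-1 - j)%N in
    if a <= b then rcons (F3_fuel f p) b
    else if 0 < r then rcons (0 :: take (size p).-1 (F3_fuel f p)) b
    else rcons (swap_blocks (F3_fuel f p)) b.
Proof. by case: p => [|y q] //=; rewrite belast_rcons last_rcons. Qed.

Lemma main f : forall w v, zmask w = zmask v -> DES (Pos w) = DES (Pos v) ->
  zmask (F3_fuel f w) = zmask (F3_fuel f v).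
Proof.
elim: f => [|f IH] w v //.
case/lastP: w => [|p b]; case/lastP: v => [|q c];
  try by move=> /zmask_size; rewrite ?size_rcons.
move=> /zmask_rcons_inj [Hm Hb] HD.
rewrite !F3_rcons.
have Hsz := zmask_size Hm.
have Hall : all (fun x => x == 0) p = all (fun x => x == 0) q.
  by rewrite -(all_map (fun x => x == 0) id) -/(zmask p) Hm /zmask all_map.
have Hfind : find (fun x => 0 < x) (rev p) = find (fun x => 0 < x) (rev q).
  have Ef : forall w, find (fun x => 0 < x) (rev w) = find negb (rev (zmask w)).
    by move=> w; rewrite /zmask -map_rev find_map; apply: eq_find => x /=; rewrite lt0n.
  by rewrite !Ef Hm.
have HPs := Pos_size Hm.
have [HDp Hc] : DES (Pos p) = DES (Pos q) /\
   ((0 < b) -> ((0 < size (Pos p)) && (b < last 0 (Pos p))) = ((0 < size (Pos q)) && (c < last 0 (Pos q)))).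
  move: HD; rewrite !Pos_rcons.
  have Hbc : (0 < b) = (0 < c) by rewrite !lt0n Hb.
  rewrite -Hbc; case: (posnP b) => [_ ->|bpos] //.
  by move=> /(DES_rcons_eq HPs) [-> ->].
have IHp := IH p q Hm HDp.
rewrite -Hall; case: ifP => Ha; first by rewrite !zmask_rcons Hm Hb.
have Ha' : ~~ all (fun x => x == 0) q by rewrite -Hall Ha.
have [Lp Pp] := La (negbT Ha).
have [Lq Pq] := La Ha'.
rewrite /= Lp Lq -Hfind Hsz.
have -> : (last 0 (Pos p) <= b) = (last 0 (Pos q) <= c).
  case: (posnP b) => [b0|bpos].
    have c0 : c = 0 by apply/eqP; rewrite -Hb b0.
    by rewrite b0 c0 !leqn0 (gtn_eqF Pp) (gtn_eqF Pq).
  have Hsp : 0 < size (Pos p) by case: (Pos p) Pp.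
  have Hsq : 0 < size (Pos q) by case: (Pos q) Pq.
  by move: (Hc bpos); rewrite Hsp Hsq /= (leqNgt (last 0 (Pos p))) (leqNgt (last 0 (Pos q))) => ->.
case: ifP => _; first by rewrite !zmask_rcons IHp Hb.
case: ifP => _.
  by move: IHp; rewrite /zmask /= !map_rcons !map_take Hb => ->.
rewrite !zmask_rcons Hb /swap_blocks; congr rcons.
rewrite (zmask_size IHp); exact: swap_zmask.
Qed.

Theorem proposition4p1 (w w'' : seq nat) :
  size w = size w'' ->
  Zero w = Zero w'' ->
  DES (Pos w) = DES (Pos w'') ->
  Zero (F3 w) = Zero (F3 w'').
Proof.
move=> Hs HZ HD; apply: Zero_zmask.
rewrite /F3 Hs; apply: main => //; exact: zmask_Zero.
Qed.
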